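(* For $\sigma,\alpha,\beta,\nu>0$ define, for $x>0$, $$f(x;\sigma,\alpha,\beta,\nu)=\frac{\nu x^{\nu-1}}{\sigma^{\nu}\,\Gamma\left(\frac{\alpha+\nu}{\beta}\right)}\,\Gamma\left(\frac{\alpha}{\beta},\left(\frac{x}{\sigma}\right)^{\beta}\right).$$ If $\sigma_1,\sigma_2,\alpha_1,\alpha_2,\beta_1,\beta_2,\nu_1,\nu_2>0$ satisfy $f(x;\sigma_1,\alpha_1,\beta_1,\nu_1)=f(x;\sigma_2,\alpha_2,\beta_2,\nu_2)$ for all $x>0$, then $\sigma_1=\sigma_2$, $\alpha_1=\alpha_2$, $\beta_1=\beta_2$ and $\nu_1=\nu_2$.
   Context: $\Gamma(a,y)=\int_y^\infty t^{a-1}e^{-t}\,dt$ denotes the upper incomplete gamma function. $f(\cdot;\sigma,\alpha,\beta,\nu)$ is the density of the scaled flexible interpretable gamma (FIG) distribution. *)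

(* Defs.v *)
From HB Require Import structures.
From mathcomp Require Import all_boot all_order all_algebra.
From mathcomp Require Import all_classical all_reals all_analysis.
Set Implicit Arguments. Unset Strict Implicit. Unset Printing Implicit Defensive.
Import Order.TTheory GRing.Theory Num.Theory.
Import numFieldNormedType.Exports.
Local Open Scope classical_set_scope.
Local Open Scope ring_scope.

(* Upper incomplete gamma function
   Gamma(a, y) = int_y^oo t^(a-1) e^(-t) dt  (Lebesgue integral over ]y, +oo[;
   the integrand is nonnegative, so the integral is always defined in \bar R,
   and it is finite for a > 0, y >= 0). *)
Definition upper_gamma {R : realType} (a y : R) : R :=
  fine (\int[@lebesgue_measure R]_(t in `]y, +oo[%classic)
          ((t `^ (a - 1)) * expR (- t))%:E)%E.

Definition gamma_fun {R : realType} (a : R) : R := upper_gamma a 0.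

Definition fig_density {R : realType} (sigma alpha beta nu x : R) : R :=
  nu * x `^ (nu - 1) / (sigma `^ nu * gamma_fun ((alpha + nu) / beta))
  * upper_gamma (alpha / beta) ((x / sigma) `^ beta).

(* Main.v *)
Require Import Defs.
From HB Require Import structures.
From mathcomp Require Import all_boot all_order all_algebra.
From mathcomp Require Import all_classical all_reals all_analysis.
Import Order.TTheory GRing.Theory Num.Theory.
Local Open Scope ring_scope.
From mathcomp Require Import ring lra.
From mathcomp Require Import measurable_realfun.
Section Alg.
Variable R : realType.
Implicit Types x c m M : R.

Lemma small_pow c m : 0 < c -> 0 < m -> exists x : R, 0 < x <= 1 /\ x `^ c < m.
Proof.
move=> c0 m0.
have m2 : 0 < m / 2 by rewrite divr_gt0.
exists (Num.min 1 ((m / 2) `^ c^-1)); split.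
  by rewrite ge_min lexx /= lt_min ltr01 /= powR_gt0.
apply: (le_lt_trans (y := m / 2)); last by rewrite ltr_pdivrMr // ltr_pMr // ltr1n.
have e : m / 2 = ((m / 2) `^ c^-1) `^ c.
  by rewrite -powRrM mulVf ?gt_eqF // powRr1 // ltW.
rewrite [X in _ <= X]e.
apply: ge0_ler_powR; first exact: ltW.
- by rewrite qualifE /= le_min ler01 powR_ge0.
- by rewrite qualifE /= powR_ge0.
- by rewrite ge_min lexx orbT.
Qed.

Lemma pow_bounded_eq0 c m M : 0 < m ->
  (forall x : R, 0 < x <= 1 -> m <= x `^ c <= M) -> c = 0.
Proof.
move=> m0 H.
have M0 : 0 < M.
  have /andP[h1 h2] := H 1 (introT andP (conj ltr01 (lexx 1))).
  exact: (lt_le_trans m0 (le_trans h1 h2)).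
case: (ltgtP c 0) => // hc.
- have [x [x01 hx]] := @small_pow (- c) (M^-1) ltac:(by rewrite oppr_gt0) ltac:(by rewrite invr_gt0).
  have /andP[_ +] := H x x01.
  have x0 : 0 < x by case/andP: x01.
  rewrite -[c]opprK powRN leNgt.
  rewrite -[M]invrK ltf_pV2 ?hx // qualifE /= ?invr_gt0 ?powR_gt0 //.
- have [x [x01 hx]] := @small_pow c m hc m0.
  by have /andP[+ _] := H x x01; rewrite leNgt hx.
Qed.
End Alg.
Section Alg2.
Variable R : realType.

Lemma powR_le1 (x b : R) : 0 < x <= 1 -> 0 <= b -> x `^ b <= 1.
Proof.
move=> /andP[x0 x1] b0.
have h1 : 1 `^ b = 1 :> R by rewrite powR1.
rewrite -[X in _ <= X]h1.
apply: ge0_ler_powR => //; by rewrite qualifE /= ?ler01 ?ltW.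
Qed.

Lemma powR_ge1 (x b : R) : 1 <= x -> 0 <= b -> 1 <= x `^ b.
Proof.
move=> x1 b0.
have h1 : 1 `^ b = 1 :> R by rewrite powR1.
rewrite -[X in X <= _]h1.
apply: ge0_ler_powR => //; rewrite qualifE /= ?ler01 //.
exact: le_trans ler01 x1.
Qed.

Lemma big_pow_diff (p1 p2 b1 b2 d : R) : 0 < p1 -> 0 < p2 -> 0 < b2 -> b2 < b1 ->
  ~ (forall x : R, 0 < x -> p1 * x `^ b1 - p2 * x `^ b2 = d).
Proof.
move=> p10 p20 b20 b21 H.
set q := (p2 + `|d| + 1) / p1.
have q0 : 0 < q by rewrite divr_gt0 //; have := normr_ge0 d; lra.
have c0 : 0 < b1 - b2 by rewrite subr_gt0.
set x := Num.max 1 (q `^ (b1 - b2)^-1).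
have x1 : 1 <= x by rewrite le_max lexx.
have x0 : 0 < x by exact: lt_le_trans ltr01 x1.
have hq : q <= x `^ (b1 - b2).
  have e : q = (q `^ (b1 - b2)^-1) `^ (b1 - b2).
    by rewrite -powRrM mulVf ?gt_eqF // powRr1 // ltW.
  rewrite [X in X <= _]e.
  apply: ge0_ler_powR; first exact: ltW.
  - by rewrite qualifE /= powR_ge0.
  - by rewrite qualifE /= ltW.
  - by rewrite le_max lexx orbT.
have hp : p2 + `|d| + 1 <= p1 * x `^ (b1 - b2).
  by rewrite -ler_pdivrMl // mulrC.
have e1 : x `^ b1 = x `^ (b1 - b2) * x `^ b2.
  by rewrite -powRD ?subrK // (gt_eqF x0) implybT.
have t1 : 1 <= x `^ b2 by apply: powR_ge1 => //; exact: ltW.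
have := H x x0; rewrite e1.
have dd : d <= `|d| := ler_norm d.
set y := x `^ (b1 - b2) in hp e1 *.
set t := x `^ b2 in t1 e1 *.
move=> h.
have n0 := normr_ge0 d.
have k1 : 0 <= (t - 1) * (p1 * y - p2 - `|d| - 1).
  apply: mulr_ge0; lra.
have k2 : 0 <= (t - 1) * (`|d| + 1).
  apply: mulr_ge0; lra.
have k3 : p1 * (y * t) = (p1 * y) * t by ring.
rewrite k3 in h.
nra.
Qed.

Lemma fig_alg (K1 K2 A1 A2 p1 p2 b1 b2 : R) : 0 < K1 -> 0 < K2 -> 0 < p1 -> 0 < p2 ->
  0 < b1 -> 0 < b2 ->
  (forall x : R, 0 < x -> K1 * x `^ A1 * expR (- (p1 * x `^ b1)) =
                   K2 * x `^ A2 * expR (- (p2 * x `^ b2))) ->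
  [/\ A1 = A2, b1 = b2 & p1 = p2].
Proof.
move=> K10 K20 p10 p20 b10 b20 E.
have A12 : A1 = A2.
  suff : A1 - A2 = 0 by move/eqP; rewrite subr_eq0 => /eqP.
  apply: (@pow_bounded_eq0 R _ (K2 / K1 * expR (- p2)) (K2 / K1 * expR p1)).
    by rewrite mulr_gt0 ?divr_gt0 ?expR_gt0.
  move=> x x01; have x0 : 0 < x by case/andP: x01.
  have u1 : x `^ b1 <= 1 by apply: powR_le1 => //; exact: ltW.
  have u2 : x `^ b2 <= 1 by apply: powR_le1 => //; exact: ltW.
  have u1' : 0 <= x `^ b1 := powR_ge0 _ _.
  have u2' : 0 <= x `^ b2 := powR_ge0 _ _.
  have e : x `^ (A1 - A2) = K2 / K1 * expR (p1 * x `^ b1 - p2 * x `^ b2).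
    rewrite powRB; last by rewrite (gt_eqF x0) implybT.
    have xA2 : 0 < x `^ A2 := powR_gt0 _ x0.
    have := E x x0; rewrite expRB.
    rewrite !expRN.
    have e1 : 0 < expR (p1 * x `^ b1) := expR_gt0 _.
    have e2 : 0 < expR (p2 * x `^ b2) := expR_gt0 _.
    move: (expR (p1 * x `^ b1)) (expR (p2 * x `^ b2)) e1 e2 => f1 f2 f10 f20 h.
    have ha : x `^ A1 = K2 * x `^ A2 * f2^-1 / (K1 * f1^-1).
      rewrite -h; field.
      by rewrite !gt_eqF.
    rewrite ha; field.
    by rewrite !gt_eqF.
  rewrite e; apply/andP; split.
    rewrite ler_pM2l ?divr_gt0 // ler_expR; nra.
  rewrite ler_pM2l ?divr_gt0 // ler_expR; nra.
have D : forall x, 0 < x -> p1 * x `^ b1 - p2 * x `^ b2 = ln K1 - ln K2.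
  move=> x x0; have := E x x0; rewrite A12 => h.
  have h' : K1 * expR (- (p1 * x `^ b1)) = K2 * expR (- (p2 * x `^ b2)).
    apply: (@mulIf _ (x `^ A2)); first by rewrite gt_eqF // powR_gt0.
    by rewrite mulrAC h mulrAC.
  have := congr1 (@ln R) h'; rewrite !lnM ?posrE ?expR_gt0 // !expRK; lra.
have B12 : b1 = b2.
  case: (ltgtP b1 b2) => // hb.
  - exfalso; apply: (@big_pow_diff p2 p1 b2 b1 (- (ln K1 - ln K2))) => // x x0.
    by rewrite -(D x x0) opprB.
  - by exfalso; apply: (@big_pow_diff p1 p2 b1 b2 (ln K1 - ln K2)).
split => //.
subst b2.
have h1 := D 1 ltr01.
have e1 : 1 `^ b1 = 1 :> R by rewrite powR1.
rewrite e1 in h1.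
have two : 0 < 2 `^ b1^-1 :> R by rewrite powR_gt0.
have h2 := D _ two.
have e2 : (2 `^ b1^-1) `^ b1 = 2 :> R.
  by rewrite -powRrM mulVf ?gt_eqF // powRr1.
rewrite e2 in h2.
lra.
Qed.
End Alg2.
Import numFieldNormedType.Exports.
Local Open Scope classical_set_scope.

Section Ana.
Variable R : realType.
Notation mu := (@lebesgue_measure R).

Definition gg (b t : R) : R := t `^ (b - 1) * expR (- t).

Lemma gg_ge0 b t : 0 <= gg b t.
Proof. by rewrite /gg mulr_ge0 ?powR_ge0 ?expR_ge0. Qed.

Lemma gg_gt0 b t : 0 < t -> 0 < gg b t.
Proof. by move=> t0; rewrite /gg mulr_gt0 ?powR_gt0 ?expR_gt0. Qed.

Lemma measurable_gg b : measurable_fun setT (gg b).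
Proof.
apply: measurable_funM; first exact: measurable_powR.
apply: measurableT_comp; first exact: measurable_expR.
exact: oppr_measurable.
Qed.

Lemma measurable_Egg b (D : set R) : measurable_fun D (fun t => (gg b t)%:E).
Proof.
apply/measurable_EFinP; apply: measurable_funS (measurable_gg b) => //.
Qed.

Lemma derivable_expN (t : R) : derivable (fun x : R => expR (- x)) t 1.
Proof.
apply/derivable1_diffP; apply: differentiable_comp.
  by apply/derivable1_diffP; exact: derivable_opp.
by apply/derivable1_diffP; exact: derivable_expR.
Qed.

Lemma derivable_gg b t : 0 < t -> derivable (gg b) t 1.
Proof.
move=> t0; apply: derivableM; last exact: derivable_expN.
by apply: derivable_powR; rewrite in_itv /= t0.
Qed.

Lemma continuous_gg b t : 0 < t -> {for t, continuous (gg b)}.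
Proof.
move=> t0; apply: differentiable_continuous.
by rewrite -derivable1_diffP; exact: derivable_gg.
Qed.

Lemma within_continuous_gg b (c u : R) : 0 < c -> {within `[c, u], continuous (gg b)}.
Proof.
move=> c0; apply: derivable_within_continuous => t; rewrite in_itv /= => /andP[ct _].
by apply: derivable_gg; exact: lt_le_trans ct.
Qed.

End Ana.
Arguments gg {R} b t.
Section Ana2.
Variable R : realType.
Notation mu := (@lebesgue_measure R).

Lemma tail_bound (b t : R) : 1 <= t ->
  gg b t <= (2 * (2 * (`|b - 1| + 1)) `^ (`|b - 1| + 1)) * exponential_pdf (2^-1) t.
Proof.
move=> t1.
set c := `|b - 1| + 1.
have c0 : 0 < c by rewrite /c ltr_wpDl // normr_ge0.
have t0 : 0 < t := lt_le_trans ltr01 t1.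
rewrite exponential_pdfE; last exact: ltW.
rewrite /gg.
have h1 : t `^ (b - 1) <= t `^ c.
  by apply: ler_powR => //; rewrite /c (le_trans (ler_norm _)) // lerDl.
have h2 : t `^ c = (2 * c) `^ c * (t / (2 * c)) `^ c.
  have q1 : 0 <= 2 * c by rewrite mulr_ge0 // ltW.
  have q2 : 0 <= t / (2 * c) by rewrite divr_ge0 // ltW.
  rewrite -powRM //.
  by congr (_ `^ _); field; rewrite gt_eqF.
have h3 : (t / (2 * c)) `^ c <= expR (t / 2).
  have -> : t / 2 = (t / (2 * c)) * c by field; rewrite gt_eqF.
  rewrite expRM; apply: ge0_ler_powR; first exact: ltW.
  - by rewrite qualifE /= divr_ge0 ?mulr_ge0 ?ltW.
  - by rewrite qualifE /= expR_ge0.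
  - apply: le_trans (expR_ge1Dx _); lra.
have h4 : expR (t / 2) * expR (- t) = expR (- (2^-1) * t).
  by rewrite -expRD; congr expR; field.
have e0 := expR_ge0 (- t).
have p0 : 0 <= (2 * c) `^ c := powR_ge0 _ _.
apply: (le_trans (y := (2 * c) `^ c * expR (t / 2) * expR (- t))).
  rewrite ler_pM2r ?expR_gt0 //.
  apply: (le_trans h1); rewrite h2; apply: ler_pM => //; exact: powR_ge0.
rewrite -mulrA h4.
have -> : 2 * (2 * c) `^ c * (2^-1 * expR (- 2^-1 * t)) = (2 * c) `^ c * expR (- 2^-1 * t).
  by field.
by [].
Qed.

End Ana2.
Section Ana3.
Variable R : realType.
Notation mu := (@lebesgue_measure R).
Local Open Scope ereal_scope.

Lemma int_tail_fin (b : R) : \int[mu]_(t in `]1%R, +oo[) (gg b t)%:E < +oo.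
Proof.
set K := (2 * (2 * (`|b - 1| + 1)) `^ (`|b - 1| + 1))%R.
have K0 : (0 <= K)%R by rewrite /K mulr_ge0 ?powR_ge0.
have mp : measurable_fun [set: R] (exponential_pdf (2^-1 : R)).
  exact: measurable_exponential_pdf.
have mK : measurable_fun [set: R] (fun t => (K * exponential_pdf (2^-1) t)%:E).
  by apply/measurable_EFinP; apply: measurable_funM.
have p0 : forall t, (0 <= K * exponential_pdf (2^-1) t)%R.
  by move=> t; rewrite mulr_ge0 // exponential_pdf_ge0 // invr_ge0.
apply: (le_lt_trans (y := \int[mu]_(t in `]1%R, +oo[) (K * exponential_pdf (2^-1) t)%:E)).
  apply: ge0_le_integral => //.
  - by move=> t _; rewrite lee_fin gg_ge0.
  - exact: measurable_Egg.
  - exact: measurable_funS mK.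
  - move=> t; rewrite /= in_itv /= => /andP[t1 _]; rewrite lee_fin.
    by apply: tail_bound; exact: ltW.
apply: (le_lt_trans (y := \int[mu]_(t in [set: R]) (K * exponential_pdf (2^-1) t)%:E)).
  apply: ge0_subset_integral => //.
  by move=> t _; rewrite lee_fin.
under eq_integral do rewrite EFinM.
rewrite ge0_integralZl //; last first.
- by move=> t _; rewrite lee_fin exponential_pdf_ge0 // invr_ge0.
- by apply/measurable_EFinP.
by rewrite integral_exponential_pdf ?invr_gt0 // mule1 ltry.
Qed.
End Ana3.
Section Ana4.
Variable R : realType.
Notation mu := (@lebesgue_measure R).

Lemma is_derive_Fpow (b x : R) : 0 < b -> 0 < x ->
  is_derive x 1 (fun t : R => b^-1 * t `^ b) (x `^ (b - 1)).
Proof.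
move=> b0 x0.
have h := is_deriveZ (b^-1) (is_derive1_powR b x0).
apply: is_derive_eq.
by rewrite /GRing.scale /= mulrA mulVf ?gt_eqF // mul1r.
Qed.

Lemma int_pow_seg (b e : R) : 0 < b -> 0 < e -> e < 1 ->
  (\int[mu]_(t in `[e, 1%R]) (t `^ (b - 1))%:E <= (b^-1)%:E)%E.
Proof.
move=> b0 e0 e1.
have D : forall x : R, 0 < x -> is_derive x 1 (fun t : R => b^-1 * t `^ b) (x `^ (b - 1)).
  by move=> x x0; exact: is_derive_Fpow.
have C : forall x : R, 0 < x -> {for x, continuous (fun t : R => b^-1 * t `^ b)}.
  move=> x x0; apply: differentiable_continuous; rewrite -derivable1_diffP.
  by have [] := D x x0.
rewrite (@continuous_FTC2 _ _ (fun t : R => b^-1 * t `^ b)) //.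
- rewrite powR1 -EFinB lee_fin.
  have : 0 <= b^-1 * e `^ b by apply: mulr_ge0; [rewrite invr_ge0 ltW | exact: powR_ge0].
  rewrite mulr1; lra.
- apply: derivable_within_continuous => t; rewrite in_itv /= => /andP[et _].
  by apply: derivable_powR; rewrite in_itv /= andbT (lt_le_trans e0 et).
- split.
  + move=> x; rewrite in_itv /= => /andP[ex _].
    by have [] := D x (lt_trans e0 ex).
  + by apply: cvg_at_right_filter; apply: C.
  + by apply: cvg_at_left_filter; apply: C.
- move=> x; rewrite in_itv /= => /andP[ex _].
  by rewrite derive1E; have [_ ->] := D x (lt_trans e0 ex).
Qed.
End Ana4.
Section Ana5.
Variable R : realType.
Notation mu := (@lebesgue_measure R).
Local Open Scope ereal_scope.

Lemma int_head_fin (b : R) : (0 < b)%R ->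
  \int[mu]_(t in `]0%R, 1%R]) (gg b t)%:E < +oo.
Proof.
move=> b0.
have mp : measurable_fun [set: R] (fun t : R => (t `^ (b - 1))%:E).
  by apply/measurable_EFinP; exact: measurable_powR.
apply: (le_lt_trans (y := \int[mu]_(t in `]0%R, 1%R]) (t `^ (b - 1))%:E)).
  apply: ge0_le_integral => //.
  - by move=> t _; rewrite lee_fin gg_ge0.
  - exact: measurable_Egg.
  - exact: measurable_funS mp.
  - move=> t; rewrite /= in_itv /= => /andP[t0 _]; rewrite lee_fin /gg.
    rewrite -[X in (_ <= X)%R]mulr1 ler_wpM2l ?powR_ge0 //.
    by rewrite expR_le1 oppr_le0 ltW.
pose F n := `[((n.+2%:R)^-1 : R)%R, 1%R]%classic.
have nd : {homo F : n m / (n <= m)%N >-> (n <= m)%O}.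
  move=> n m nm; rewrite subsetEset /F /= => t; rewrite /= !in_itv /= => /andP[h1 ->].
  rewrite andbT; apply: le_trans h1.
  by rewrite lef_pV2 ?posrE ?ler_nat ?ltr0n.
have U : \bigcup_n F n = `]0%R, 1%R]%classic.
  apply/seteqP; split => t.
    move=> [n _]; rewrite /F /= !in_itv /= => /andP[h1 ->].
    by rewrite andbT (lt_le_trans _ h1) // invr_gt0 ltr0n.
  rewrite /= in_itv /= => /andP[t0 t1].
  have [k hk] := ltr_add_invr t0.
  exists k => //; rewrite /F /= in_itv /= t1 andbT.
  rewrite add0r in hk; apply: le_trans (ltW hk).
  by rewrite lef_pV2 ?posrE ?ler_nat ?ltr0n.
have H := @ge0_nondecreasing_set_cvg_integral _ (measurableTypeR R) R F (fun t => (t `^ (b - 1))%:E) lebesgue_measure nd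
  ltac:(by move=> i; exact: measurable_itv)
  ltac:(by move=> i; exact: measurable_funS mp)
  ltac:(by move=> i t _; rewrite lee_fin powR_ge0).
rewrite U in H.
apply: (le_lt_trans (y := (b^-1)%:E)); last exact: ltry.
apply: (cvge_to_le H); apply: nearW => n.
apply: int_pow_seg => //.
by rewrite invf_lt1 ?ltr1n ?ltr0n.
Qed.
End Ana5.
Section Ana6.
Variable R : realType.
Notation mu := (@lebesgue_measure R).
Local Open Scope ereal_scope.

Lemma split_int (b a c : R) : (a < c)%R ->
  \int[mu]_(t in `]a, +oo[) (gg b t)%:E =
  \int[mu]_(t in `]a, c]) (gg b t)%:E + \int[mu]_(t in `]c, +oo[) (gg b t)%:E.
Proof.
move=> ac.
have -> : `]a, +oo[%classic = `]a, c] `|` `]c, +oo[.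
  apply/seteqP; split => t /=; rewrite !in_itv /= ?andbT.
    by move=> at_; case: (leP t c) => tc; [left; rewrite at_ | right].
  by case=> [/andP[]|] // ct; exact: lt_trans ac ct.
apply: ge0_integral_setU => //.
- exact: measurable_Egg.
- by move=> t _; rewrite lee_fin gg_ge0.
- apply/disj_set2P; apply/seteqP; split => t //=.
  rewrite !in_itv /= andbT => -[/andP[_ tc] ct].
  by move: (lt_le_trans ct tc); rewrite ltxx.
Qed.

Lemma int_fin (b y : R) : (0 < b)%R -> (0 <= y)%R ->
  \int[mu]_(t in `]y, +oo[) (gg b t)%:E < +oo.
Proof.
move=> b0 y0.
apply: (le_lt_trans (y := \int[mu]_(t in `]0%R, +oo[) (gg b t)%:E)).
  apply: ge0_subset_integral => //.
  - exact: measurable_Egg.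
  - by move=> t _; rewrite lee_fin gg_ge0.
  - by move=> t /=; rewrite !in_itv /= !andbT; apply: le_lt_trans.
rewrite (@split_int b 0 1) //.
by rewrite lte_add_pinfty // ?int_head_fin ?int_tail_fin.
Qed.

Lemma int_pos (b y : R) : (0 <= y)%R -> 0 < \int[mu]_(t in `]y, +oo[) (gg b t)%:E.
Proof.
move=> y0.
set m := ((((y + 2) `^ `|b - 1|)^-1) * expR (- (y + 2)))%R.
have m0 : (0 < m)%R.
  by rewrite /m mulr_gt0 ?invr_gt0 ?powR_gt0 ?expR_gt0 //; lra.
apply: (lt_le_trans (y := \int[mu]_(t in `[(y + 1)%R, (y + 2)%R]) (cst m%:E) t)).
  rewrite integral_cst //= lebesgue_measure_itv /= lte_fin.
  have -> : (y + 1 < y + 2)%R by lra.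
  rewrite -EFinD mule_gt0 // lte_fin; lra.
apply: (le_trans (y := \int[mu]_(t in `[(y + 1)%R, (y + 2)%R]) (gg b t)%:E)).
  apply: ge0_le_integral => //.
  - by move=> t _; rewrite lee_fin ltW.
  - exact: measurable_Egg.
  - move=> t; rewrite /= in_itv /= => /andP[t1 t2]; rewrite lee_fin /gg /m.
    have t0 : (1 <= t)%R by lra.
    apply: ler_pM.
    + by rewrite invr_ge0 powR_ge0.
    + exact: expR_ge0.
    + apply: (le_trans (y := (t `^ (- `|b - 1|))%R)).
        rewrite powRN lef_pV2 ?posrE ?powR_gt0 //; try lra.
        apply: ge0_ler_powR => //; rewrite ?qualifE /=; lra.
      apply: ler_powR => //.
      have := ler_norm (b - 1); have := ler_norm (- (b - 1)); rewrite normrN; lra.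
    + by rewrite ler_expR; lra.
apply: ge0_subset_integral => //.
- exact: measurable_Egg.
- by move=> t _; rewrite lee_fin gg_ge0.
- by move=> t /=; rewrite !in_itv /= andbT => /andP[t1 _]; lra.
Qed.
End Ana6.
Section Ana7.
Variable R : realType.
Notation mu := (@lebesgue_measure R).

Lemma int_ge0 (b : R) (D : set R) : measurable D -> (0 <= \int[mu]_(t in D) (gg b t)%:E)%E.
Proof. by move=> mD; apply: integral_ge0 => t _; rewrite lee_fin gg_ge0. Qed.

Lemma UG_E (b y : R) : 0 < b -> 0 <= y ->
  (upper_gamma b y)%:E = (\int[mu]_(t in `]y, +oo[) (gg b t)%:E)%E.
Proof.
move=> b0 y0; rewrite /upper_gamma fineK //.
by rewrite ge0_fin_numE ?int_ge0 //; exact: int_fin.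
Qed.

Lemma UG_pos (b y : R) : 0 < b -> 0 <= y -> 0 < upper_gamma b y.
Proof. by move=> b0 y0; rewrite -lte_fin UG_E //; exact: int_pos. Qed.

Lemma UG_anti (b y z : R) : 0 < b -> 0 <= y -> y <= z ->
  upper_gamma b z <= upper_gamma b y.
Proof.
move=> b0 y0 yz; rewrite -lee_fin !UG_E //; last exact: le_trans yz.
apply: ge0_subset_integral => //.
- exact: measurable_Egg.
- by move=> t _; rewrite lee_fin gg_ge0.
- by move=> t /=; rewrite !in_itv /= !andbT; apply: le_lt_trans.
Qed.

Lemma UG_derive (b y : R) : 0 < b -> 0 < y ->
  is_derive y 1 (upper_gamma b) (- gg b y).
Proof.
move=> b0 y0.
set c := y / 2.
have c0 : 0 < c by rewrite divr_gt0.
have cy : c < y by rewrite /c; lra.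
have iF : mu.-integrable `]c, y + 1] (EFin \o gg b).
  apply: (@integrableS _ (measurableTypeR R) R mu `[c, y + 1]) => //.
    by move=> t /=; rewrite !in_itv /= => /andP[/ltW -> ->].
  apply: continuous_compact_integrable; first exact: segment_compact.
  exact: within_continuous_gg.
have [dF F'] := @continuous_FTC1 R (gg b) (BRight c) y (y + 1)
  ltac:(lra) iF ltac:(by rewrite lte_fin) (@continuous_gg R b y y0).
set F := fun x => (\int[mu]_(t in [set` Interval (BRight c) (BRight x)]) gg b t)%R.
have isF : is_derive y 1 F (gg b y).
  by have := derivableP dF; rewrite -derive1E F'.
have isG : is_derive y 1 (fun x => upper_gamma b c - F x) (0 - gg b y).
  exact: is_deriveB.
rewrite sub0r in isG.
apply: near_eq_is_derive isG.
near=> x.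
have cx : c < x by near: x; exact: lt_nbhsr.
have fin1 : (\int[mu]_(t in `]c, x]) (gg b t)%:E)%E \is a fin_num.
  rewrite ge0_fin_numE ?int_ge0 //.
  apply: le_lt_trans (@int_fin R b c b0 (ltW c0)).
  apply: ge0_subset_integral => //.
  - exact: measurable_Egg.
  - by move=> t _; rewrite lee_fin gg_ge0.
  - by move=> t /=; rewrite !in_itv /= andbT => /andP[].
have e : (upper_gamma b c)%:E = (F x)%:E + (upper_gamma b x)%:E.
  rewrite UG_E ?(ltW c0) // (@split_int R b c x cx) UG_E //; last exact: ltW (lt_trans c0 cx).
  by rewrite /F /Rintegral fineK.
have e' : upper_gamma b c = F x + upper_gamma b x.
  by apply: EFin_inj; rewrite EFinD.
rewrite e'; lra.
Unshelve. all: by end_near.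
Qed.
End Ana7.
Section Main.
Variable R : realType.

Lemma fig_E (s a b n x : R) : 0 < s -> 0 < x ->
  fig_density s a b n x = (n / (s `^ n * gamma_fun ((a + n) / b))) * x `^ (n - 1)
    * upper_gamma (a / b) ((s^-1) `^ b * x `^ b).
Proof.
move=> s0 x0; rewrite /fig_density [n * _ / _]mulrAC.
congr (_ * upper_gamma _ _).
by rewrite powRM ?invr_ge0 ?ltW // mulrC.
Qed.

Lemma H_derive (a p b x : R) : 0 < a -> 0 < p -> 0 < b -> 0 < x ->
  is_derive x 1 (fun x => upper_gamma a (p * x `^ b))
    (- gg a (p * x `^ b) * (p * (b * x `^ (b - 1)))).
Proof.
move=> a0 p0 b0 x0.
have d1 : is_derive x 1 (fun x : R => p * x `^ b) (p * (b * x `^ (b - 1))).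
  have h := is_deriveZ p (is_derive1_powR b x0).
  exact: h.
have u0 : 0 < p * x `^ b by rewrite mulr_gt0 // powR_gt0.
have d2 := @UG_derive R a _ a0 u0.
have dc : derivable ((upper_gamma a) \o (fun x : R => p * x `^ b)) x 1.
  apply/derivable1_diffP; apply: differentiable_comp.
    by apply/derivable1_diffP; have [] := d1.
  by apply/derivable1_diffP; have [] := d2.
apply: DeriveDef; first exact: dc.
rewrite -derive1E (derive1_comp (f := fun x : R => p * x `^ b) (g := upper_gamma a)).
- by rewrite !derive1E !derive_val.
- by have [] := d1.
- by have [] := d2.
Qed.

End Main.
Section Main2.
Variable R : realType.

Lemma gform (a p b x : R) : 0 < p -> 0 < x ->
  gg a (p * x `^ b) * (p * (b * x `^ (b - 1))) =
  (p `^ (a - 1) * p * b) * x `^ (b * a - 1) * expR (- (p * x `^ b)).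
Proof.
move=> p0 x0.
have pp : 0 <= p by exact: ltW.
have xb : 0 <= x `^ b := powR_ge0 _ _.
rewrite /gg powRM // -powRrM.
have e : x `^ (b * (a - 1)) * x `^ (b - 1) = x `^ (b * a - 1).
  have q : b * (a - 1) + (b - 1) = b * a - 1 by ring.
  by rewrite -q (@powRD R x (b * (a - 1)) (b - 1)) // (gt_eqF x0) implybT.
rewrite -e; ring.
Qed.

Lemma n_step (D1 D2 n1 n2 : R) (H1 H2 : R -> R) (h1 h2 g1 g2 : R) :
  0 < D1 -> 0 < D2 -> 0 < h1 -> 0 < h2 ->
  (forall x, 0 < x <= 1 -> h1 <= H1 x <= g1) ->
  (forall x, 0 < x <= 1 -> h2 <= H2 x <= g2) ->
  (forall x, 0 < x -> D1 * x `^ (n1 - 1) * H1 x = D2 * x `^ (n2 - 1) * H2 x) ->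
  n1 = n2.
Proof.
move=> D10 D20 h10 h20 B1 B2 E.
have g10 : 0 < g1.
  have /andP[l u] := B1 1 (introT andP (conj ltr01 (lexx 1))).
  exact: lt_le_trans h10 (le_trans l u).
have : n1 - n2 = 0.
  apply: (@pow_bounded_eq0 R _ (D2 * h2 / (D1 * g1)) (D2 * g2 / (D1 * h1))).
    by rewrite divr_gt0 ?mulr_gt0.
  move=> x x01; have x0 : 0 < x by case/andP: x01.
  have /andP[l1 u1] := B1 x x01.
  have /andP[l2 u2] := B2 x x01.
  have e : x `^ (n1 - n2) * (D1 * H1 x) = D2 * H2 x.
    have ex := E x x0.
    have q : n1 - n2 = (n1 - 1) - (n2 - 1) by ring.
    rewrite q powRB; last by rewrite (gt_eqF x0) implybT.
    have xp : 0 < x `^ (n2 - 1) := powR_gt0 _ x0.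
    apply: (@mulIf _ (x `^ (n2 - 1))); first by rewrite gt_eqF.
    rewrite -mulrA [D2 * _ * _]mulrAC -ex.
    field; by rewrite gt_eqF.
  have r0 : 0 < x `^ (n1 - n2) := powR_gt0 _ x0.
  move: (x `^ (n1 - n2)) r0 e => r r0 e.
  have H10 : 0 < H1 x := lt_le_trans h10 l1.
  apply/andP; split.
    rewrite ler_pdivrMr ?mulr_gt0 //.
    have k1 : 0 <= r * D1 * (g1 - H1 x) by apply: mulr_ge0; [apply: mulr_ge0; exact: ltW | rewrite subr_ge0].
    have k2 : D2 * h2 <= D2 * H2 x by rewrite ler_pM2l.
    nra.
  rewrite ler_pdivlMr ?mulr_gt0 //.
  have k1 : 0 <= r * D1 * (H1 x - h1) by apply: mulr_ge0; [apply: mulr_ge0; exact: ltW | rewrite subr_ge0].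
  have k2 : D2 * H2 x <= D2 * g2 by rewrite ler_pM2l.
  nra.
by move/eqP; rewrite subr_eq0 => /eqP.
Qed.

End Main2.
Lemma Hbounds (R : realType) (a p b x : R) : 0 < a -> 0 < p -> 0 < b -> 0 < x <= 1 ->
  upper_gamma a p <= upper_gamma a (p * x `^ b) <= upper_gamma a 0.
Proof.
move=> a0 p0 b0 x01; have x0 : 0 < x by case/andP: x01.
have u0 : 0 <= p * x `^ b by rewrite mulr_ge0 ?powR_ge0 // ltW.
apply/andP; split; apply: UG_anti => //.
apply: ler_piMr; first exact: ltW.
apply: powR_le1 => //; exact: ltW.
Qed.

Lemma deriv_eq (R : realType) (f g : R -> R) (x df dg : R) :
  (forall y, 0 < y -> f y = g y) -> 0 < x ->
  is_derive x 1 f df -> is_derive x 1 g dg -> df = dg.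
Proof.
move=> fg x0 hf hg.
have hg' : is_derive x 1 g df.
  apply: near_eq_is_derive hf; near=> y; apply: fg.
  by near: y; exact: lt_nbhsr.
by rewrite -(@derive_val _ _ _ _ _ _ _ hg') (@derive_val _ _ _ _ _ _ _ hg).
Unshelve. all: by end_near.
Qed.

Local Close Scope classical_set_scope.

Theorem mainTheorem6 (R : realType)
  (s1 s2 a1 a2 b1 b2 n1 n2 : R)
  (hs1 : 0 < s1) (hs2 : 0 < s2) (ha1 : 0 < a1) (ha2 : 0 < a2)
  (hb1 : 0 < b1) (hb2 : 0 < b2) (hn1 : 0 < n1) (hn2 : 0 < n2) :
  (forall x : R, 0 < x -> fig_density s1 a1 b1 n1 x = fig_density s2 a2 b2 n2 x) ->
  [/\ s1 = s2, a1 = a2, b1 = b2 & n1 = n2].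
Proof.
move=> E.
have E' : forall x : R, 0 < x ->
  (n1 / (s1 `^ n1 * gamma_fun ((a1 + n1) / b1))) * x `^ (n1 - 1)
    * upper_gamma (a1 / b1) ((s1^-1) `^ b1 * x `^ b1) =
  (n2 / (s2 `^ n2 * gamma_fun ((a2 + n2) / b2))) * x `^ (n2 - 1)
    * upper_gamma (a2 / b2) ((s2^-1) `^ b2 * x `^ b2).
  by move=> x x0; rewrite -!fig_E //; exact: E.
have c1 : 0 < a1 / b1 by rewrite divr_gt0.
have c2 : 0 < a2 / b2 by rewrite divr_gt0.
have G1 : 0 < gamma_fun ((a1 + n1) / b1).
  by apply: UG_pos => //; rewrite divr_gt0 // addr_gt0.
have G2 : 0 < gamma_fun ((a2 + n2) / b2).
  by apply: UG_pos => //; rewrite divr_gt0 // addr_gt0.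
have D10 : 0 < n1 / (s1 `^ n1 * gamma_fun ((a1 + n1) / b1)).
  by rewrite divr_gt0 // mulr_gt0 // powR_gt0.
have D20 : 0 < n2 / (s2 `^ n2 * gamma_fun ((a2 + n2) / b2)).
  by rewrite divr_gt0 // mulr_gt0 // powR_gt0.
have p10 : 0 < (s1^-1) `^ b1 by rewrite powR_gt0 // invr_gt0.
have p20 : 0 < (s2^-1) `^ b2 by rewrite powR_gt0 // invr_gt0.
have sp1 : s1 = (((s1^-1) `^ b1) `^ (b1^-1))^-1.
  by rewrite -powRrM mulfV ?gt_eqF // powRr1 ?invrK // invr_ge0 ltW.
have sp2 : s2 = (((s2^-1) `^ b2) `^ (b2^-1))^-1.
  by rewrite -powRrM mulfV ?gt_eqF // powRr1 ?invrK // invr_ge0 ltW.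
rewrite sp1 sp2.
move: E' D10 D20 p10 p20.
move: (n1 / (s1 `^ n1 * gamma_fun ((a1 + n1) / b1))) => D1.
move: (n2 / (s2 `^ n2 * gamma_fun ((a2 + n2) / b2))) => D2.
move: ((s1^-1) `^ b1) => p1.
move: ((s2^-1) `^ b2) => p2.
move=> E' D10 D20 p10 p20.
have n12 : n1 = n2.
  apply: (@n_step R D1 D2 n1 n2
    (fun x => upper_gamma (a1 / b1) (p1 * x `^ b1))
    (fun x => upper_gamma (a2 / b2) (p2 * x `^ b2))
    (upper_gamma (a1 / b1) p1) (upper_gamma (a2 / b2) p2)
    (upper_gamma (a1 / b1) 0) (upper_gamma (a2 / b2) 0)) => //.
  - by apply: UG_pos => //; exact: ltW.
  - by apply: UG_pos => //; exact: ltW.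
  - by move=> x x01; exact: Hbounds.
  - by move=> x x01; exact: Hbounds.
subst n2.
have E2 : forall x : R, 0 < x ->
  D1 * upper_gamma (a1 / b1) (p1 * x `^ b1) = D2 * upper_gamma (a2 / b2) (p2 * x `^ b2).
  move=> x x0; have := E' x x0.
  rewrite [D1 * _ * _]mulrAC [D2 * _ * _]mulrAC => /mulIf; apply.
  by rewrite gt_eqF // powR_gt0.
have key : forall x : R, 0 < x ->
  (D1 * (p1 `^ (a1 / b1 - 1) * p1 * b1)) * x `^ (b1 * (a1 / b1) - 1) * expR (- (p1 * x `^ b1)) =
  (D2 * (p2 `^ (a2 / b2 - 1) * p2 * b2)) * x `^ (b2 * (a2 / b2) - 1) * expR (- (p2 * x `^ b2)).
  move=> x x0.
  have d1 := is_deriveZ D1 (@H_derive R (a1 / b1) p1 b1 x c1 p10 hb1 x0).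
  have d2 := is_deriveZ D2 (@H_derive R (a2 / b2) p2 b2 x c2 p20 hb2 x0).
  have := @deriv_eq R _ _ x _ _ (fun y y0 => E2 y y0) x0 d1 d2.
  rewrite /GRing.scale /= !mulNr !gform // => h.
  have h' := congr1 (fun z => - z) h; rewrite /= -!mulrN !opprK in h'.
  by rewrite !mulrA in h' *; rewrite !mulrN in h'.
have K1 : 0 < D1 * (p1 `^ (a1 / b1 - 1) * p1 * b1).
  by rewrite !mulr_gt0 // powR_gt0.
have K2 : 0 < D2 * (p2 `^ (a2 / b2 - 1) * p2 * b2).
  by rewrite !mulr_gt0 // powR_gt0.
have [A12 B12 P12] := @fig_alg R _ _ _ _ p1 p2 b1 b2 K1 K2 p10 p20 hb1 hb2 key.
subst b2 p2; split => //.
have e : b1 * (a1 / b1) = b1 * (a2 / b1).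
  by move: A12 => /(congr1 (fun z => z + 1)); rewrite !subrK.
by rewrite [b1 * (a1 / b1)]mulrC [b1 * (a2 / b1)]mulrC !divfK ?gt_eqF in e.
Qed.
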